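(* If $(M,(I,O))$ is a left-connected oriented map with root $r$, then every vertex of $M$ not containing $r$ is incident to a half-edge in $I$, and every face of $M$ not containing $r$ is incident to a half-edge in $O$.
   Context: A map is $M=(H,\sigma,\alpha)$ with $H$ finite, $\alpha$ a fixed-point-free involution, $\sigma$ a permutation, $\langle\sigma,\alpha\rangle$ transitive, with root $r\in H$. Vertices are cycles of $\sigma$, faces are cycles of $\phi=\sigma\alpha$ ($\phi(h)=\sigma(\alpha(h))$); a half-edge is incident to a vertex/face if it belongs to the cycle. An orientation is a partition $H=I\uplus O$ with $\alpha(I)=O$. A left-path is a sequence $h_1,\dots,h_k$ of half-edges in $I$ such that, with $h_0=r$, for each $j$ there is $q_j>0$ with $h_{j-1}=\sigma^{q_j}(\alpha(h_j))$ and $\sigma^p(\alpha(h_j))\in O$ for $p=0,\dots,q_j-1$. The oriented map is left-connected if every half-edge of $I$ is the last element of a left-path. *)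

(* Defs.v *)
From mathcomp Require Import all_boot all_fingroup.
Set Implicit Arguments. Unset Strict Implicit. Unset Printing Implicit Defensive.

Section Maps.
Variable H : finType.

Definition is_map (sigma alpha : {perm H}) : Prop :=
  (forall h, alpha (alpha h) = h) /\
  (forall h, alpha h != h) /\
  (forall x y : H, connect (fun a b => (b == sigma a) || (b == alpha a)) x y).

Definition phi (sigma alpha : {perm H}) (h : H) : H := sigma (alpha h).

Definition is_orientation (alpha : {perm H}) (I O : {set H}) : Prop :=
  [/\ I :&: O = set0, I :|: O = setT & [set alpha h | h in I] = O].

Definition left_step (sigma alpha : {perm H}) (O : {set H}) (prev h : H) : Prop :=
  exists q : nat, [/\ 0 < q, prev = iter q sigma (alpha h) &
    forall p, p < q -> iter p sigma (alpha h) \in O].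

(* left_path_from prev s : s = h_1 .. h_k is a left-path starting after h_0 = prev. *)
Fixpoint left_path_from (sigma alpha : {perm H}) (I O : {set H}) (prev : H)
    (s : seq H) : Prop :=
  match s with
  | [::] => True
  | h :: s' => [/\ h \in I, left_step sigma alpha O prev h &
                  left_path_from sigma alpha I O h s']
  end.

Definition left_connected (sigma alpha : {perm H}) (r : H) (I O : {set H}) : Prop :=
  forall h, h \in I -> exists s : seq H, left_path_from sigma alpha I O r (rcons s h).

End Maps.

(* Main.v *)
Require Import Defs.
From mathcomp Require Import all_boot all_fingroup.

Lemma lp_rcons (H : finType) (sigma alpha : {perm H}) I O p s h :
  left_path_from sigma alpha I O p (rcons s h) ->
  [/\ left_path_from sigma alpha I O p s, left_step sigma alpha O (last p s) h & h \in I].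
Proof.
elim: s p => [|y s IH] p /=; first by case=> hI st _.
case=> yI st /IH [l1 l2 l3]; by split.
Qed.

Lemma lp_last (H : finType) (sigma alpha : {perm H}) I O p s :
  left_path_from sigma alpha I O p s -> s != [::] -> last p s \in I.
Proof.
elim: s p => [|y s IH] p //= [yI _ l] _.
case: s IH l => [|z s] IH l //=; exact: (IH y l).
Qed.

Theorem mainTheorem10 (H : finType) (sigma alpha : {perm H}) (r : H)
    (I O : {set H}) :
  is_map sigma alpha -> is_orientation alpha I O ->
  left_connected sigma alpha r I O ->
  (forall h : H, ~~ fconnect sigma h r ->
     exists2 h', fconnect sigma h h' & h' \in I) /\
  (forall h : H, ~~ fconnect (phi sigma alpha) h r ->
     exists2 h', fconnect (phi sigma alpha) h h' & h' \in O).
Proof.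
move=> [inv [_ _]] [IO0 IOT aIO] LC.
have notO x : x \notin O -> x \in I.
  move=> xO; have : x \in I :|: O by rewrite IOT inE.
  by rewrite inE (negbTE xO) orbF.
have OaI x : x \in O -> alpha x \in I.
  by rewrite -aIO => /imsetP [i iI ->]; rewrite inv.
have IaO x : x \in I -> alpha x \in O.
  by move=> xI; rewrite -aIO; apply/imsetP; exists x.
have IOx x : x \in I -> x \in O -> False.
  move=> a b; have : x \in I :&: O by rewrite inE a b.
  by rewrite IO0 inE.
split.
- move=> v nv.
  case: (boolP (v \in I)) => vI; first by exists v.
  have vO : v \in O by apply/negPn/negP => /notO; rewrite (negbTE vI).
  have [s /lp_rcons [lp [q [q0 e _]] _]] := LC _ (OaI _ vO).
  rewrite inv in e.
  have cv : fconnect sigma v (last r s) by rewrite e; exact: fconnect_iter.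
  case: s lp e cv => [|y s] lp e cv.
    by rewrite /= in cv; rewrite cv in nv.
  exists (last r (y :: s)) => //; exact: lp_last lp _.
- move=> v nv.
  case: (boolP [exists h', fconnect (phi sigma alpha) v h' && (h' \in O)]).
    by move=> /existsP [h' /andP [a b]]; exists h'.
  move=> /existsPn nO; exfalso.
  have nO' h' : fconnect (phi sigma alpha) v h' -> h' \notin O.
    by move=> c; have := nO h'; rewrite c.
  have step h : fconnect (phi sigma alpha) v h ->
      fconnect (phi sigma alpha) v (phi sigma alpha h).
    move=> c; apply: connect_trans c _; exact: fconnect1.
  have key s : forall h, left_path_from sigma alpha I O r (rcons s h) ->
      fconnect (phi sigma alpha) v h -> False.
    elim/last_ind: s => [|s y IH] h /lp_rcons [lp [q [q0 e allO]] hI] c.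
    + case: q q0 e allO => [|[|q]] // _ e allO.
        by rewrite /= in e; move: nv; rewrite e; have := step _ c; rewrite /phi => ->.
      have := allO 1 isT; rewrite /= => sO.
      by have := nO' _ (step _ c); rewrite /phi sO.
    + rewrite last_rcons in e.
      case: q q0 e allO => [|[|q]] // _ e allO.
        apply: (IH y lp); rewrite e /=; exact: step.
      have := allO 1 isT; rewrite /= => sO.
      by have := nO' _ (step _ c); rewrite /phi sO.
  have vI : v \in I by apply: notO; apply: nO'; exact: connect0.
  have [s lp] := LC _ vI.
  exact: key s v lp (connect0 _ _).
Qed.
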